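(* Let $N\ge 2$ be an integer and $\tau>0$. For $t\in\{0,\tau,2\tau,\dots\}$ let $u_j^t=u(j,t)$, $j=0,\dots,N$, be defined by prescribed initial values $u(j,0)$ with $0\le u(j,0)\le 1$ for $j=0,\dots,N$, the Dirichlet boundary condition $u_0^t=u_N^t=0$ for all $t$, and the iteration, for $j=1,\dots,N-1$, $$u_j^{t+\tau}=u_j^t+\frac{u_j^tu_{j-1}^t}{2}\bigl(u_j^t+u_{j-1}^t-1\bigr)\bigl(u_{j-1}^t-u_j^t\bigr)+\frac{u_j^tu_{j+1}^t}{2}\bigl(u_j^t+u_{j+1}^t-1\bigr)\bigl(u_{j+1}^t-u_j^t\bigr).$$ Then the total density is conserved: for every $t\in\{0,\tau,2\tau,\dots\}$, $$\sum_{j=1}^{N-1}u(j,t+\tau)=\sum_{j=1}^{N-1}u(j,t).$$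
   Context: This is an aggregation–diffusion lattice model for a cell density on the grid points $x_j=j/N$; $\tau$ is the time step. *)

(* Defs.v *)
From HB Require Import structures.
From mathcomp Require Import all_boot all_order all_algebra.
From mathcomp Require Import reals.
Set Implicit Arguments. Unset Strict Implicit. Unset Printing Implicit Defensive.
Import Order.TTheory GRing.Theory Num.Theory.
Local Open Scope ring_scope.

Definition lattice_step {R : realType} (u : nat -> R -> R) (j : nat) (t : R) : R :=
  u j t
  + (u j t * u j.-1 t / 2) * (u j t + u j.-1 t - 1) * (u j.-1 t - u j t)
  + (u j t * u j.+1 t / 2) * (u j t + u j.+1 t - 1) * (u j.+1 t - u j t).

(* Main.v *)
Require Import Defs.
From HB Require Import structures.
From mathcomp Require Import all_boot all_order all_algebra.
From mathcomp Require Import reals ring.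
Import Order.TTheory GRing.Theory Num.Theory.
Local Open Scope ring_scope.

Theorem theorem3p2 (R : realType) (N : nat) (tau : R) (u : nat -> R -> R)
  (hN : (2 <= N)%N) (htau : 0 < tau)
  (hinit : forall j : nat, (j <= N)%N -> 0 <= u j 0 <= 1)
  (hbd0 : forall k : nat, u 0%N (k%:R * tau) = 0)
  (hbdN : forall k : nat, u N (k%:R * tau) = 0)
  (hstep : forall (k j : nat), (1 <= j)%N -> (j <= N.-1)%N ->
     u j (k%:R * tau + tau) = lattice_step u j (k%:R * tau)) :
  forall k : nat,
    \sum_(1 <= j < N) u j (k%:R * tau + tau) = \sum_(1 <= j < N) u j (k%:R * tau).
Proof.
move=> k.
set t := k%:R * tau.
pose F (j : nat) := (u j t * u j.+1 t / 2) * (u j t + u j.+1 t - 1) * (u j.+1 t - u j t).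
pose H (j : nat) := F j.-1.
have E : \sum_(1 <= j < N) u j (t + tau)
       = \sum_(1 <= j < N) (u j t + (H j.+1 - H j)).
  rewrite big_nat_cond [RHS]big_nat_cond; apply: eq_bigr => j /andP[/andP[h1 h2] _].
  rewrite /t hstep //; last by rewrite -ltnS (ltn_predK h2).
  rewrite /lattice_step /H /F /=.
  case: j h1 {h2} => // j _ /=.
  move: (u j t) (u j.+1 t) (u j.+2 t) => a b c.
  rewrite /= ; ring.
rewrite E big_split /= telescope_sumr; last by apply: ltnW.
rewrite /H /F /=.
clear E hstep hinit; case: N hN hbdN => // n _ hbdN /=.
have -> : u n.+1 t = 0 by exact: hbdN.
have -> : u 0%N t = 0 by exact: hbd0.
by rewrite !(mul0r, mulr0, subrr, addr0).
Qed.
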